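(* Let $M\ge2$, $n_1,\dots,n_M\ge2$, $\mathcal S=\prod_{j=1}^M\{1,\dots,n_j\}$, and $Q=\prod_{i=1}^M n_i-\sum_{i=1}^M n_i+M-1$. Define, for $I\subseteq\{1,\dots,M\}$, $$c_{\{1,\dots,M\}}=1,\qquad c_I=\frac{M-1-\sum_{i\in I}n_i}{Q}\quad (I\ne\{1,\dots,M\}),$$ and let $C$ be the $\mathcal S\times\mathcal S$ matrix with $C_{z,z'}=c_{A(z,z')}$, where $A(z,z')$ is the set of indices at which $z$ and $z'$ have equal coordinates. Let $\lambda_J$, $J\subseteq\{1,\dots,M\}$, be given by $$\lambda_J=\sum_{I\subseteq\{1,\dots,M\}}(-1)^{\#(J^C\cap I^C)}\,c_I\prod_{j\in J\cap I^C}(n_j-1).$$ Then $\lambda_J=\dfrac{\prod_{i=1}^M n_i}{Q}$ for every $J$ with $\#J<M-1$, and $\lambda_J=0$ for every $J$ with $\#J\ge M-1$. Consequently the maximum eigenvalue of $C$ is $$\lambda_{\max}=\frac{\prod_{i=1}^M n_i}{\prod_{i=1}^M n_i-\sum_{i=1}^M n_i+M-1}.$$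
   Context: $I^C=\{1,\dots,M\}\setminus I$; $\#$ denotes cardinality; empty products equal $1$. The eigenvalues of a matrix of this form (entries depending only on the agreement set of the two strata) are exactly the $\lambda_J$ with multiplicities $\prod_{j\notin J}(n_j-1)$. (In the paper, $C$ is the conjectured asymptotic correlation matrix of normalized within-stratum imbalances under Pocock–Simon minimization with equally prevalent strata.) *)

(* Defs.v *)
From HB Require Import structures.
From mathcomp Require Import all_boot all_order all_algebra.
Set Implicit Arguments. Unset Strict Implicit. Unset Printing Implicit Defensive.
Import Order.TTheory GRing.Theory Num.Theory.
Local Open Scope ring_scope.

Section Defs.
Variables (R : realFieldType) (M : nat) (n : 'I_M -> nat).

Definition strata := {dffun forall j : 'I_M, 'I_(n j)}.

Definition agree (z z' : strata) : {set 'I_M} := [set j | z j == z' j].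

Definition Qc : R := \prod_(i < M) (n i)%:R - \sum_(i < M) (n i)%:R + M%:R - 1.

Definition cI (I : {set 'I_M}) : R :=
  if I == [set: 'I_M] then 1
  else (M%:R - 1 - \sum_(i in I) (n i)%:R) / Qc.

Definition Cmat : 'M[R]_#|{: strata}| :=
  \matrix_(a, b) cI (agree (enum_val a) (enum_val b)).

Definition lambdaJ (J : {set 'I_M}) : R :=
  \sum_(I : {set 'I_M})
     (-1) ^+ #|~: J :&: ~: I| * cI I * \prod_(j in J :&: ~: I) ((n j)%:R - 1).
End Defs.

(* Main.v *)
Require Import Defs.
From HB Require Import structures.
From mathcomp Require Import all_boot all_order all_algebra.
From mathcomp Require Import ring lra zify.
Set Implicit Arguments. Unset Strict Implicit. Unset Printing Implicit Defensive.
Import Order.TTheory GRing.Theory Num.Theory.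
Local Open Scope ring_scope.
Lemma cI_dec (R : realFieldType) M (n : 'I_M -> nat) (I : {set 'I_M}) : Qc R n != 0 ->
  cI R n I = (if I == setT then (\prod_(i < M) (n i)%:R) / Qc R n else 0)
           + (M%:R - 1 - \sum_(i in I) (n i)%:R) / Qc R n.
Proof.
move=> hQ; rewrite /cI; case: eqP => [->|_]; last by rewrite add0r.
rewrite -mulrDl (_ : _ + _ = Qc R n) ?divff //.
rewrite /Qc. have -> : \sum_(i in [set: 'I_M]) (n i)%:R = \sum_(i < M) (n i)%:R :> R.
  by apply: eq_bigl => i; rewrite in_setT.
ring.
Qed.

Definition wJ (R : realFieldType) M (n : 'I_M -> nat) (J I : {set 'I_M}) : R :=
  \prod_j (if j \in I then 1 else if j \in J then (n j)%:R - 1 else -1).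

Lemma wJ_eq (R : realFieldType) M (n : 'I_M -> nat) (J I : {set 'I_M}) :
  (-1) ^+ #|~: J :&: ~: I| * \prod_(j in J :&: ~: I) ((n j)%:R - 1) = wJ R n J I.
Proof.
rewrite -prodr_const (big_mkcond (fun j => j \in _)) (big_mkcond (fun j => j \in _)) -big_split.
apply: eq_bigr => j _ /=; rewrite !inE.
by case: (j \in I); case: (j \in J); rewrite /= ?mulr1 ?mul1r.
Qed.

Definition hJ (R : realFieldType) M (n : 'I_M -> nat) (J : {set 'I_M}) (j : 'I_M) : R :=
  if j \in J then (n j)%:R else 0.

Lemma sum_wJ (R : realFieldType) M (n : 'I_M -> nat) (J : {set 'I_M}) :
  \sum_(I : {set 'I_M}) wJ R n J I = \prod_j hJ R n J j.
Proof.
rewrite /wJ -(@bigA_distr R 0 1 *%R +%R _ (fun _ => 1) (fun j => if j \in J then (n j)%:R - 1 else -1)).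
apply: eq_bigr => j _; rewrite /hJ; case: (j \in J); simpl; rewrite ?subrr //; ring.
Qed.

Lemma sum_wJ_i (R : realFieldType) M (n : 'I_M -> nat) (J : {set 'I_M}) i :
  \sum_(I : {set 'I_M}) (i \in I)%:R * wJ R n J I =
  \prod_j (if j == i then 1 else hJ R n J j).
Proof.
pose G j : R := if j == i then 0 else if j \in J then (n j)%:R - 1 else -1.
transitivity (\sum_(I : {set 'I_M}) \prod_j (if j \in I then 1 else G j)).
  apply: eq_bigr => I _; rewrite /wJ /G.
  case iI: (i \in I) => /=.
    rewrite mul1r; apply: eq_bigr => j _; case jI: (j \in I) => //.
    by case: eqP => // ji; move: jI; rewrite ji iI.
  rewrite mul0r; apply/esym/eqP; rewrite prodf_seq_eq0; apply/hasP; exists i.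
    by rewrite mem_index_enum.
  by rewrite /= iI eqxx.
rewrite -(@bigA_distr R 0 1 *%R +%R _ (fun _ => 1) G).
apply: eq_bigr => j _; rewrite /hJ /G; case: eqP => _; simpl; first by rewrite addr0.
by case: (j \in J); simpl; rewrite ?subrr //; ring.
Qed.

Lemma lambda_form (R : realFieldType) M (n : 'I_M -> nat) (J : {set 'I_M}) : Qc R n != 0 ->
  lambdaJ R n J = (\prod_(i < M) (n i)%:R) / Qc R n
    + (M%:R - 1) / Qc R n * \prod_j hJ R n J j
    - (Qc R n)^-1 * \sum_i (n i)%:R * \prod_j (if j == i then 1 else hJ R n J j).
Proof.
move=> hQ; set Q := Qc R n; set N := \prod_(i < M) (n i)%:R.
have -> : lambdaJ R n J = \sum_(I : {set 'I_M}) wJ R n J I * cI R n I.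
  by rewrite /lambdaJ; apply: congr_big => // I0 _; rewrite -wJ_eq mulrAC.
have E I : wJ R n J I * cI R n I = (if I == setT then wJ R n J I * (N / Q) else 0)
     + ((M%:R - 1) / Q * wJ R n J I
     - Q^-1 * \sum_i (n i)%:R * ((i \in I)%:R * wJ R n J I)).
  rewrite cI_dec // mulrDr; congr (_ + _); first by case: eqP; rewrite ?mulr0.
  have -> : \sum_i (n i)%:R * ((i \in I)%:R * wJ R n J I) = wJ R n J I * \sum_(i in I) (n i)%:R.
    rewrite [RHS]mulr_sumr [RHS]big_mkcond; apply: eq_bigr => i _ /=.
    by case: (i \in I); rewrite ?mulr0 ?mul0r ?mulr0 // mul1r mulrC.
  by rewrite /Q; field.
rewrite (eq_bigr _ (fun I _ => E I)).
rewrite big_split /= (bigD1 setT) //= eqxx big1; last by move=> I /negPf ->.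
rewrite addr0 sumrB -mulr_sumr -mulr_sumr sum_wJ exchange_big /=.
have -> : wJ R n J setT = 1 by rewrite /wJ big1 // => j _; rewrite in_setT.
rewrite mul1r addrA; congr (_ - _ * _); apply: eq_bigr => i _.
by rewrite -mulr_sumr sum_wJ_i.
Qed.

Lemma zero_prod (R : realFieldType) M (n : 'I_M -> nat) (J : {set 'I_M}) i j :
  j \notin J -> j != i -> \prod_k (if k == i then 1 else hJ R n J k) = 0.
Proof.
move=> jJ ji; rewrite (bigD1 j) //= (negPf ji) /hJ (negPf jJ) mul0r //.
Qed.

Lemma prod_drop (R : realFieldType) M (n : 'I_M -> nat) i :
  (n i)%:R * \prod_k (if k == i then 1 else (n k)%:R) = \prod_(k < M) (n k)%:R :> R.
Proof.
rewrite [RHS](bigD1 i) //= (bigD1 i) //= eqxx mul1r; congr (_ * _).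
by apply: eq_bigr => k /negPf ->.
Qed.

Lemma lam_small (R : realFieldType) M (n : 'I_M -> nat) (J : {set 'I_M}) : Qc R n != 0 ->
  (#|J| < M - 1)%N -> lambdaJ R n J = (\prod_(i < M) (n i)%:R) / Qc R n.
Proof.
move=> hQ hJc; rewrite lambda_form //.
have hc : (1 < #|~: J|)%N.
  by have := cardsC J; rewrite card_ord; lia.
case/card_gt1P: hc => j1 [j2 []]; rewrite !inE => j1J j2J j12.
have -> : \prod_j hJ R n J j = 0.
  by rewrite (bigD1 j1) //= /hJ (negPf j1J) mul0r.
rewrite mulr0 addr0 [\sum_i _]big1 ?mulr0 ?subr0 // => i _.
case: (eqVneq j1 i) => [<-|j1i].
  by rewrite (zero_prod R n j2J) ?mulr0 // eq_sym.
by rewrite (zero_prod R n j1J) ?mulr0.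
Qed.

Lemma lam_big (R : realFieldType) M (n : 'I_M -> nat) (J : {set 'I_M}) : Qc R n != 0 ->
  (M - 1 <= #|J|)%N -> lambdaJ R n J = 0.
Proof.
move=> hQ hJc; rewrite lambda_form //.
have hc : (#|~: J| <= 1)%N.
  by have := cardsC J; rewrite card_ord; lia.
case: (pickP (mem (~: J))) => [i0 i0J|allJ].
  have oth j : j != i0 -> j \in J.
    move=> ji; apply/negPn/negP => jJ.
    have e : j = i0 by apply: (card_le1_eqP hc) => //; rewrite inE.
    by move: ji; rewrite e eqxx.
  move: i0J; rewrite /= in_setC => i0J.
  have -> : \prod_j hJ R n J j = 0.
    by rewrite (bigD1 i0) //= /hJ (negPf i0J) mul0r.
  rewrite [\sum_i _](bigD1 i0) //= [\sum_(i | _) _]big1 ?addr0; last first.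
    by move=> i ii0; rewrite (zero_prod R n i0J) ?mulr0 // eq_sym.
  rewrite -(prod_drop R n i0).
  have -> : \prod_k (if k == i0 then 1 else hJ R n J k) =
            \prod_k (if k == i0 then 1 else (n k)%:R) :> R.
    by apply: eq_bigr => k _; case: eqP => // /eqP ki; rewrite /hJ oth.
  by rewrite mulr0 addr0 mulrC subrr.
have inJ j : j \in J by move: (allJ j); rewrite /= inE => /negbFE.
have -> : \prod_j hJ R n J j = \prod_(i < M) (n i)%:R.
  by apply: eq_bigr => j _; rewrite /hJ inJ.
have E i : (n i)%:R * \prod_k (if k == i then 1 else hJ R n J k) = \prod_(i < M) (n i)%:R :> R.
  rewrite -(prod_drop R n i); congr (_ * _).
  by apply: eq_bigr => k _; rewrite /hJ inJ.
rewrite (eq_bigr _ (fun i _ => E i)).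
rewrite sumr_const card_ord -mulr_natl; by field.
Qed.
Lemma eig_to_fun (R : realFieldType) M (n : 'I_M -> nat) (a : R) :
  eigenvalue (Cmat R n) a -> exists u : strata n -> R, (exists z, u z != 0) /\
    forall y, \sum_x u x * cI R n (agree x y) = a * u y.
Proof.
case/eigenvalueP => v Hv v0.
exists (fun z => v 0 (enum_rank z)); split.
  have : exists j, v 0 j != 0.
    apply/existsP; move: v0; apply: contraR; rewrite negb_exists => /forallP H.
    apply/eqP/rowP => j; rewrite mxE; exact/eqP/negPn/H.
  by case=> j vj; exists (enum_val j); rewrite enum_valK.
move=> y; move/rowP: Hv => /(_ (enum_rank y)).
rewrite !mxE => <-.
rewrite (big_enum_val (A := {: strata n})) /=.
apply: eq_bigr => i _; rewrite enum_valK mxE enum_rankK //.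
Qed.

Lemma fun_to_eig (R : realFieldType) M (n : 'I_M -> nat) (a : R) (u : strata n -> R) :
  (exists z, u z != 0) -> (forall y, \sum_x u x * cI R n (agree x y) = a * u y) ->
  eigenvalue (Cmat R n) a.
Proof.
move=> [z uz] H; apply/eigenvalueP; exists (\row_j u (enum_val j)).
  apply/rowP => k; rewrite !mxE -H (big_enum_val (A := {: strata n})) /=.
  by apply: eq_bigr => i _; rewrite !mxE.
apply/eqP => /rowP /(_ (enum_rank z)); rewrite !mxE enum_rankK => /eqP.
by rewrite (negPf uz).
Qed.
Lemma sum_ind (R : realFieldType) (T : finType) m (k : T -> 'I_m) x (f : 'I_m -> R) :
  \sum_j (k x == j)%:R * f j = f (k x).
Proof.
rewrite (bigD1 (k x)) //= eqxx mul1r big1 ?addr0 // => j.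
by rewrite eq_sym => /negPf ->; rewrite mul0r.
Qed.

Lemma sum_ind1 (R : realFieldType) (T : finType) m (k : T -> 'I_m) x :
  \sum_j (k x == j)%:R = 1 :> R.
Proof.
rewrite (bigD1 (k x)) //= eqxx big1 ?addr0 // => j.
by rewrite eq_sym => /negPf ->.
Qed.

Lemma cs_part (R : realFieldType) (T : finType) m (k : T -> 'I_m) (u : T -> R) : (0 < m)%N ->
  (\sum_x u x) ^+ 2 <= m%:R * \sum_x \sum_y (k x == k y)%:R * (u x * u y).
Proof.
move=> m0.
pose S j := \sum_x (k x == j)%:R * u x.
have e1 : \sum_x u x = \sum_j S j.
  rewrite /S exchange_big /=; apply: eq_bigr => x _.
  by rewrite -mulr_suml sum_ind1 mul1r.
have e2 : \sum_x \sum_y (k x == k y)%:R * (u x * u y) = \sum_j S j ^+ 2.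
  transitivity (\sum_j \sum_x \sum_y (k x == j)%:R * u x * ((k y == j)%:R * u y)).
    rewrite [RHS]exchange_big /=; apply: eq_bigr => x _.
    rewrite [RHS]exchange_big /=; apply: eq_bigr => y _.
    transitivity (\sum_j (k x == j)%:R * ((k y == j)%:R * (u x * u y))).
      by rewrite (sum_ind k x (fun j => (k y == j)%:R * (u x * u y))) eq_sym.
    by apply: eq_bigr => j _; rewrite !mulrA; congr (_ * _); rewrite mulrAC.
  apply: eq_bigr => j _; rewrite expr2 /S mulr_suml; apply: eq_bigr => x _.
  by rewrite mulr_sumr.
rewrite e1 e2; set T0 := \sum_j S j; have eT : T0 = \sum_j S j by []; clearbody T0 S.
have h : 0 <= \sum_j (m%:R * S j - T0) ^+ 2 by apply: sumr_ge0 => j _; exact: sqr_ge0.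
have e3 : \sum_j (m%:R * S j - T0) ^+ 2 =
   m%:R ^+ 2 * \sum_j S j ^+ 2 - 2%:R * m%:R * T0 * T0 + m%:R * T0 ^+ 2 :> R.
  transitivity (\sum_j (m%:R ^+ 2 * S j ^+ 2 - 2%:R * m%:R * T0 * S j + T0 ^+ 2)).
    by apply: eq_bigr => j _; ring.
  rewrite big_split sumrB /= -!mulr_sumr sumr_const card_ord -eT -[T0 *+ m]mulr_natl; ring.
rewrite e3 in h.
have mp : 0 < m%:R :> R by rewrite ltr0n.
have : 0 <= m%:R * (m%:R * \sum_j S j ^+ 2 - T0 ^+ 2) :> R by nra.
by rewrite pmulr_rge0 // subr_ge0.
Qed.
Lemma prod_ge (R : realFieldType) (I : eqType) (r : seq I) (x : I -> R) : (forall i, 0 <= x i) ->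
  1 + \sum_(i <- r) x i <= \prod_(i <- r) (1 + x i).
Proof.
move=> x0; elim: r => [|a r IH]; first by rewrite !big_nil addr0.
rewrite !big_cons.
have h1 : 1 <= \prod_(i <- r) (1 + x i).
  by apply: le_trans IH; rewrite lerDl sumr_ge0.
have := x0 a => xa.
have : x a * 1 <= x a * \prod_(i <- r) (1 + x i) by rewrite ler_wpM2l.
nra.
Qed.
Lemma prod_ge2 (R : realFieldType) (I : eqType) (a b : I) (r : seq I) (x : I -> R) : (forall i, 1 <= x i) ->
  2 + \sum_(i <- a :: b :: r) x i <= \prod_(i <- a :: b :: r) (1 + x i).
Proof.
move=> x1; have x0 : forall i, 0 <= x i by move=> i; apply: le_trans (x1 i).
rewrite !big_cons.
have := prod_ge r x0; have := x1 a; have := x1 b.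
set P := \prod_(_ <- _) _; set S := \sum_(_ <- _) _ => h1 h2 h3.
have h4 : 0 <= S by rewrite sumr_ge0.
have h5 : (1 + x a) * (1 + x b) * (1 + S) <= (1 + x a) * (1 + x b) * P.
  by rewrite ler_wpM2l // mulr_ge0 // addr_ge0.
rewrite mulrA. have h6: 1 <= x a * x b by rewrite -[1]mulr1 ler_pM. have h7 : 0 <= S * (x a + x b + x a * x b) by apply: mulr_ge0 => //; nra.
nra.
Qed.

Lemma Qpos (R : realFieldType) (M : nat) (n : 'I_M -> nat) : (2 <= M)%N -> (forall i, (2 <= n i)%N) -> 0 < Qc R n.
Proof.
move=> M2 n2.
pose x i : R := (n i)%:R - 1.
have x1 i : 1 <= x i by rewrite /x lerBrDr (_ : 1 + 1 = 2%:R) // ler_nat n2.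
have -> : Qc R n = \prod_(i <- enum 'I_M) (1 + x i) - \sum_(i <- enum 'I_M) x i - 1.
  rewrite /Qc !big_enum /=.
  have -> : \sum_(i in 'I_M) (n i)%:R = \sum_(i in 'I_M) (1 + x i) :> R.
    by apply: eq_bigr => i _; rewrite /x addrC subrK.
  rewrite big_split /= sumr_const.
  rewrite cardE size_enum_ord.
  have -> : \prod_(i < M) (n i)%:R = \prod_(i in 'I_M) (1 + x i) :> R.
    by apply: eq_big => // i _; rewrite /x addrC subrK.
  ring.
have ge2 := prod_ge2 _ _ _ x1.
have sz := size_enum_ord M.
case: (enum 'I_M) sz => [|a [|b r]] /= sz; try lia.
have := ge2 a b r; lra.
Qed.

Lemma agreeT M (n : 'I_M -> nat) (x y : strata n) : (agree x y == setT) = (x == y).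
Proof.
apply/eqP/eqP => [H|->]; last by apply/setP => j; rewrite !inE eqxx.
apply/ffunP => j; have : j \in agree x y by rewrite H inE.
by rewrite inE => /eqP.
Qed.

Lemma c_dec (R : realFieldType) M (n : 'I_M -> nat) (x y : strata n) : Qc R n != 0 ->
  cI R n (agree x y) = (x == y)%:R * ((\prod_(i < M) (n i)%:R) / Qc R n)
    + (M%:R - 1 - \sum_i (x i == y i)%:R * (n i)%:R) / Qc R n.
Proof.
move=> hQ; rewrite cI_dec // agreeT; congr (_ + (_ - _) / _).
  by case: eqP; rewrite ?mul1r ?mul0r.
rewrite big_mkcond; apply: eq_bigr => i _; rewrite inE.
by case: eqP; rewrite ?mul1r ?mul0r.
Qed.

Lemma quad (R : realFieldType) M (n : 'I_M -> nat) (u : strata n -> R) : Qc R n != 0 ->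
  \sum_y u y * \sum_x u x * cI R n (agree x y) =
  (\prod_(i < M) (n i)%:R) / Qc R n * \sum_y u y ^+ 2
  + (M%:R - 1) / Qc R n * (\sum_x u x) ^+ 2
  - (Qc R n)^-1 * \sum_i (n i)%:R * \sum_(x : strata n) \sum_(y : strata n) (x i == y i)%:R * (u x * u y).
Proof.
move=> hQ; set d := _ / Qc R n; set Q := Qc R n.
have E y x : u y * (u x * cI R n (agree x y)) =
   (x == y)%:R * (u x * u y) * d + (M%:R - 1) / Q * (u x * u y)
   - Q^-1 * \sum_i (n i)%:R * ((x i == y i)%:R * (u x * u y)).
  rewrite c_dec //.
  have -> : \sum_i (n i)%:R * ((x i == y i)%:R * (u x * u y)) =
            (u x * u y) * \sum_i (x i == y i)%:R * (n i)%:R.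
    by rewrite mulr_sumr; apply: eq_bigr => i _; ring.
  rewrite -/d -/Q. field. done.
transitivity (\sum_(y : strata n) \sum_(x : strata n) ((x == y)%:R * (u x * u y) * d + (M%:R - 1) / Q * (u x * u y)
   - Q^-1 * \sum_i (n i)%:R * ((x i == y i)%:R * (u x * u y)))).
  apply: eq_bigr => y _; rewrite mulr_sumr; apply: eq_bigr => x _; exact: E.
rewrite (eq_bigr (fun y : strata n => \sum_x (x == y)%:R * (u x * u y) * d + \sum_x (M%:R - 1) / Q * (u x * u y)
   - \sum_(x : strata n) Q^-1 * \sum_i (n i)%:R * ((x i == y i)%:R * (u x * u y)))); last first.
  by move=> y _; rewrite sumrB big_split.
rewrite sumrB big_split /=; congr (_ + _ - _).
- rewrite mulr_sumr; apply: eq_bigr => y _.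
  rewrite (bigD1 y) //= eqxx mul1r big1 ?addr0; first by rewrite expr2 mulrC.
  by move=> x /negPf ->; rewrite !mul0r.
- rewrite expr2 mulrA mulr_sumr; apply: eq_bigr => y _.
  rewrite -mulrA mulr_suml mulr_sumr; apply: eq_bigr => x _; ring.
- transitivity (Q^-1 * \sum_(y : strata n) \sum_(x : strata n) \sum_i (n i)%:R * ((x i == y i)%:R * (u x * u y))).
    by rewrite mulr_sumr; apply: eq_bigr => y _; rewrite mulr_sumr.
  congr (_ * _); rewrite exchange_big /=.
  under eq_bigr do rewrite exchange_big /=.
  rewrite exchange_big /=; apply: eq_bigr => i _.
  rewrite mulr_sumr; apply: eq_bigr => x _; rewrite mulr_sumr //.
Qed.

Lemma eig_le (R : realFieldType) M (n : 'I_M -> nat) (u : strata n -> R) (a : R) :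
  (2 <= M)%N -> (forall i, (2 <= n i)%N) -> (exists z, u z != 0) ->
  (forall y, \sum_x u x * cI R n (agree x y) = a * u y) ->
  a <= (\prod_(i < M) (n i)%:R) / Qc R n.
Proof.
move=> M2 n2 [z uz] H.
have Qp := Qpos R M2 n2; have hQ : Qc R n != 0 by rewrite gt_eqF.
have q := quad u hQ.
have e : \sum_y u y * \sum_x u x * cI R n (agree x y) = a * \sum_y u y ^+ 2.
  rewrite mulr_sumr; apply: eq_bigr => y _; rewrite H expr2; ring.
rewrite e in q.
set Y := \sum_y u y ^+ 2 in q.
set X := \sum_x u x in q.
set W := \sum_i _ in q.
set N := \prod_(i < M) _ in q *.
have hW : M%:R * X ^+ 2 <= W.
  rewrite mulr_natl (_ : X ^+ 2 *+ M = \sum_(i < M) X ^+ 2); last by rewrite sumr_const card_ord.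
  rewrite /W.
  apply: ler_sum => i _; apply: (@cs_part R (strata n) (n i) (fun x => x i) u).
  by apply: leq_trans (n2 i).
have hY : 0 < Y.
  rewrite /Y (bigD1 z) //=; apply: (@lt_le_trans _ _ (u z ^+ 2)).
    by rewrite lt_def sqr_ge0 andbT sqrf_eq0.
  by rewrite lerDl sumr_ge0 // => i _; exact: sqr_ge0.
have Qi : 0 < (Qc R n)^-1 by rewrite invr_gt0.
have h1 : (Qc R n)^-1 * (M%:R * X ^+ 2) <= (Qc R n)^-1 * W by rewrite ler_wpM2l // ltW.
have h2 : 0 <= (Qc R n)^-1 * X ^+ 2 by apply: mulr_ge0; [exact: ltW | exact: sqr_ge0].
have h3 : a * Y <= N / Qc R n * Y.
  rewrite q; move: h1 h2; rewrite /W; set WW := \sum_i _.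
  rewrite -[_ / Qc R n]mulrC -[(M%:R - 1) / _]mulrC.
  nra.
by rewrite -(ler_pM2r hY).
Qed.

Definition sw m (t : 'I_m) : 'I_m :=
  if val t == 0%N then insubd t 1%N else if val t == 1%N then insubd t 0%N else t.

Definition ee (R : realFieldType) m (t : 'I_m) : R :=
  if val t == 0%N then 1 else if val t == 1%N then -1 else 0.

Lemma sw_inv m (t : 'I_m) : sw (sw t) = t.
Proof.
apply: val_inj; rewrite /sw; case: t => t lt /=.
case: t lt => [|[|t]] lt /=.
- case: (ltnP 1 m) => m1.
    by rewrite insubdK //= insubdK // ltnW.
  rewrite /insubd insubF //=; by [rewrite ltnNge m1].
- have h0 : val (insubd (Ordinal lt) 0%N) = 0%N by rewrite insubdK //; apply: ltnW.
  by rewrite h0 /= insubdK.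
- by [].
Qed.

Lemma ee_sw (R : realFieldType) m (t : 'I_m) : (1 < m)%N -> ee R (sw t) = - ee R t.
Proof.
move=> m1; rewrite /ee /sw; case: t => t lt /=.
case: t lt => [|[|t]] lt /=.
- by rewrite /insubd insubT.
- rewrite /insubd insubT /=; [exact: ltnW | by move=> _; rewrite opprK].
- ring.
Qed.

Definition sigma M (n : 'I_M -> nat) (j : 'I_M) (x : strata n) : strata n :=
  [ffun k => if k == j then sw (x k) else x k].

Lemma sigma_inv M (n : 'I_M -> nat) j (x : strata n) : sigma j (sigma j x) = x.
Proof.
apply/ffunP => k; rewrite !ffunE; case: eqP => // _; exact: sw_inv.
Qed.

Lemma sum_anti (R : realFieldType) M (n : 'I_M -> nat) j (F : strata n -> R) :
  (forall x, F (@sigma M n j x) = - F x) -> \sum_x F x = 0.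
Proof.
move=> H.
have inj : injective (@sigma M n j) by apply: (can_inj (@sigma_inv M n j)).
have e : \sum_x F x = - \sum_x F x.
  rewrite [LHS](reindex_inj inj) /= -sumrN; apply: eq_bigr => x _; exact: H.
have : (\sum_x F x) *+ 2 = 0 by rewrite mulr2n {1}e addNr.
by move/eqP; rewrite mulrn_eq0 /= => /eqP.
Qed.

Lemma eig_lmax (R : realFieldType) M (n : 'I_M -> nat) :
  (2 <= M)%N -> (forall i, (2 <= n i)%N) ->
  eigenvalue (Cmat R n) ((\prod_(i < M) (n i)%:R) / Qc R n).
Proof.
move=> M2 n2.
have Qp := Qpos R M2 n2; have hQ : Qc R n != 0 by rewrite gt_eqF.
have M0 : (0 < M)%N by apply: leq_trans M2.
have M1 : (1 < M)%N by [].
pose i0 := Ordinal M0; pose i1 := Ordinal M1.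
have i01 : (i1 == i0) = false by [].
have i10 : (i0 == i1) = false by [].
pose u (x : strata n) := ee R (x i0) * ee R (x i1).
have npos j : (0 < n j)%N by apply: leq_trans (n2 j).
apply: (@fun_to_eig R M n _ u).
  exists ([ffun j => Ordinal (npos j)] : strata n).
  by rewrite /u !ffunE /ee /= mulr1 oner_eq0.
move=> y.
have su : \sum_x u x = 0.
  apply: (@sum_anti R M n i0) => x.
  by rewrite /u /sigma !ffunE eqxx i01 ee_sw ?n2 // mulNr.
have si i : \sum_(x : strata n) (x i == y i)%:R * u x = 0.
  case: (eqVneq i i0) => [->|ii0].
    apply: (@sum_anti R M n i1) => x.
    by rewrite /u /sigma !ffunE eqxx i10 ee_sw ?n2 // mulrN mulrN.
  apply: (@sum_anti R M n i0) => x.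
  by rewrite /u /sigma !ffunE eqxx i01 (negPf ii0) ee_sw ?n2 // mulNr mulrN.
set d := _ / Qc R n; set Q := Qc R n.
transitivity (\sum_(x : strata n) ((x == y)%:R * u x * d + (M%:R - 1) / Q * u x
   - Q^-1 * \sum_i (n i)%:R * ((x i == y i)%:R * u x))).
  apply: eq_bigr => x _; rewrite c_dec // -/d -/Q.
  have -> : \sum_i (n i)%:R * ((x i == y i)%:R * u x) =
            u x * \sum_i (x i == y i)%:R * (n i)%:R.
    by rewrite mulr_sumr; apply: eq_bigr => i _; ring.
  by field.
rewrite sumrB big_split /= -mulr_sumr su mulr0 addr0.
rewrite (_ : \sum_x Q^-1 * _ = 0); last first.
  rewrite -mulr_sumr exchange_big /= big1 ?mulr0 // => i _.
  by rewrite -mulr_sumr si mulr0.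
rewrite subr0 (bigD1 y) //= eqxx mul1r big1 ?addr0 1?mulrC //.
by move=> x /negPf ->; rewrite !mul0r.
Qed.

Unset Implicit Arguments.
Theorem lemma1 (R : realFieldType) (M : nat) (n : 'I_M -> nat) :
  (2 <= M)%N -> (forall i, (2 <= n i)%N) ->
  let lmax : R := (\prod_(i < M) (n i)%:R) / Qc R n in
  (forall J : {set 'I_M}, (#|J| < M - 1)%N -> lambdaJ R n J = lmax) /\
  (forall J : {set 'I_M}, (M - 1 <= #|J|)%N -> lambdaJ R n J = 0) /\
  (eigenvalue (Cmat R n) lmax /\
   forall a : R, eigenvalue (Cmat R n) a -> a <= lmax).
Proof.
move=> M2 n2 lmax.
have Qp := Qpos R M2 n2; have hQ : Qc R n != 0 by rewrite gt_eqF.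
split; first by move=> J hJ; exact: lam_small.
split; first by move=> J hJ; exact: lam_big.
split; first exact: eig_lmax.
move=> a /eig_to_fun [u [nz H]]; exact: eig_le M2 n2 nz H.
Qed.
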